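(* Let $W$ be a finite set, $\mathtt{N}=\{N_1,\ldots,N_r\}$ a sequence of subsets of $W$, and $K(\mathtt{N})$ the associated simplicial complex. Then $K(\mathtt{N})$ has a minimal Taylor resolution.
   Context: The sequence $\mathtt{N}$ may contain repetitions ($N_i=N_j$ for $i\ne j$ allowed). Choose distinct new points $a_1,\ldots,a_r\notin W$, put $\widetilde{N}_i=N_i\sqcup\{a_i\}$ and $V=W\sqcup\{a_1,\ldots,a_r\}$. $K(\mathtt{N})$ is the simplicial complex on vertex set $V$ whose minimal non-faces are exactly $\widetilde{N}_1,\ldots,\widetilde{N}_r$ (its faces are the subsets of $V$ containing no $\widetilde{N}_i$). A minimal non-face of a simplicial complex $K$ is a non-empty vertex subset $N\notin K$ with $N-\{i\}\in K$ for all $i\in N$. If $N_1,\ldots,N_r$ are the minimal non-faces of $K$, the Taylor resolution of the Stanley–Reisner ring $\Bbbk[K]=\Bbbk[v_1,\ldots,v_m]/(v_I\mid I\notin K)$ is the free resolution with degree $-\ell$ term free on $w_{i_1,\ldots,i_\ell}$, $1\le i_1<\cdots<i_\ell\le r$, and differential $d(w_{i_1,\ldots,i_\ell})=\sum_{k}(-1)^{k+1}v_{(N_{i_1}\cup\cdots\cup N_{i_\ell})-(N_{i_1}\cup\cdots\widehat{N_{i_k}}\cdots\cup N_{i_\ell})}w_{i_1,\ldots,\widehat{i_k},\ldots,i_\ell}$ ($v_S=\prod_{s\in S}v_s$, $v_\emptyset=1$). $K$ has a minimal Taylor resolution if $d\otimes_{\Bbbk[v_1,\ldots,v_m]}\Bbbk=0$;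 this is independent of $\Bbbk$ and equivalent to $N_i\not\subset\bigcup_{k\ne i}N_k$ for all $i$. *)

(* Defs.v *)
From HB Require Import structures.
From mathcomp Require Import all_boot all_order all_algebra.
Set Implicit Arguments. Unset Strict Implicit. Unset Printing Implicit Defensive.
Import GRing.Theory.
Local Open Scope ring_scope.

(* A simplicial complex on a finite vertex type V is represented by its set of
   faces, a set of subsets of V. *)

(* The complex K(N): vertex set V = W + 'I_r, where inr i is the new point a_i;
   tilde N_i = N_i ⊔ {a_i}; faces = subsets containing no tilde N_i. *)
Definition tildeN (W : finType) (r : nat) (N : 'I_r -> {set W}) (i : 'I_r)
  : {set (W + 'I_r)%type} := (inl @: N i) :|: [set inr i].

Definition KN (W : finType) (r : nat) (N : 'I_r -> {set W})
  : {set {set (W + 'I_r)%type}} :=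
  [set F : {set (W + 'I_r)%type} | [forall i : 'I_r, ~~ (tildeN N i \subset F)]].

Definition is_min_nonface (V : finType) (K : {set {set V}}) (A : {set V}) : bool :=
  [&& A != set0, A \notin K & [forall x in A, (A :\ x) \in K]].

Definition min_nonfaces (V : finType) (K : {set {set V}}) : {set {set V}} :=
  [set A | is_min_nonface K A].

Definition mnf_list (V : finType) (K : {set {set V}}) (i : 'I_#|min_nonfaces K|)
  : {set V} := enum_val i.

(* Image in the field k (i.e. after - ⊗_{k[v]} k, where every v_s ↦ 0) of the
   monomial v_S: it is 1 if S is empty and 0 otherwise. *)
Definition monomial_mod (k : fieldType) (V : finType) (S : {set V}) : k :=
  if S == set0 then 1 else 0.

(* Coefficient of w_{I - i} in d(w_I) in the Taylor resolution, tensored with k.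
   The sign is (-1)^(p+1) where p is the (1-based) position of i in I, i.e.
   (-1)^#|{j in I | j < i}|. *)
Definition taylor_coef (k : fieldType) (V : finType) (K : {set {set V}})
  (I : {set 'I_#|min_nonfaces K|}) (i : 'I_#|min_nonfaces K|) : k :=
  (-1) ^+ #|[set j in I | (j < i)%N]| *
  monomial_mod k ((\bigcup_(j in I) mnf_list j) :\: (\bigcup_(j in I :\ i) mnf_list j)).

(* The differential d ⊗ k of the Taylor resolution, on the k-vector space with
   basis w_I (I ranging over subsets of indices), coordinates as finite functions. *)
Definition taylor_d_tensor (k : fieldType) (V : finType) (K : {set {set V}})
  (x : {ffun {set 'I_#|min_nonfaces K|} -> k}) : {ffun {set 'I_#|min_nonfaces K|} -> k} :=
  [ffun J => \sum_(I : {set 'I_#|min_nonfaces K|})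
               \sum_(i in I | I :\ i == J) taylor_coef k I i * x I].

Definition has_minimal_taylor (k : fieldType) (V : finType) (K : {set {set V}}) : Prop :=
  forall x : {ffun {set 'I_#|min_nonfaces K|} -> k}, taylor_d_tensor x = 0.

(* Main.v *)
Require Import Defs.
From mathcomp Require Import all_boot all_order all_algebra.
Import GRing.Theory.

Lemma mnf_tilde (W : finType) (r : nat) (N : 'I_r -> {set W}) A :
  A \in min_nonfaces (KN N) -> exists a, A = tildeN N a.
Proof.
rewrite inE /is_min_nonface => /and3P [_ AnK /forallP H].
move: AnK; rewrite inE negb_forall => /existsP [a]; rewrite negbK => sub.
exists a; apply/eqP; rewrite eqEsubset sub andbT.
apply/subsetP => x xA; apply/negPn/negP => xn.
have := H x; rewrite xA /= inE => /forallP /(_ a).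
by rewrite subsetD1 sub xn.
Qed.

Lemma inr_tilde (W : finType) (r : nat) (N : 'I_r -> {set W}) a b :
  (inr b \in tildeN N a) = (b == a).
Proof.
rewrite /tildeN in_setU in_set1.
have -> : (inr b \in inl @: N a) = false.
  by apply/negbTE/imsetP => [[y _]].
by [].
Qed.

Theorem corollary2p2 (W : finType) (r : nat) (N : 'I_r -> {set W})
  (k : fieldType) : has_minimal_taylor k (KN N).
Proof.
move=> x; apply/ffunP => J; rewrite !ffunE.
apply: big1 => I _; apply: big1 => i /andP [iI _].
rewrite /taylor_coef /monomial_mod.
have [a Ha] := @mnf_tilde W r N _ (enum_valP i).
case: ifP => [/eqP E|_]; last by rewrite !mulr0 mul0r.
have : inr a \in (set0 : {set (W + 'I_r)%type}).
  rewrite -E in_setD; apply/andP; split.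
    apply/negP => /bigcupP [j]; rewrite in_setD1 => /andP [ji _].
    have [b Hb] := @mnf_tilde W r N _ (enum_valP j).
    rewrite /mnf_list Hb inr_tilde => /eqP ab; subst b.
    by move/eqP: ji; apply; apply: enum_val_inj; rewrite Ha Hb.
  by apply/bigcupP; exists i => //; rewrite /mnf_list Ha inr_tilde.
by rewrite in_set0.
Qed.
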